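(* Let $k\geq 1$ and $g\geq 0$ be integers, let $a<b$, and let $a=\lambda_0<\lambda_1<\cdots<\lambda_g<\lambda_{g+1}=b$. Extend the knot sequence by coincident additional knots $\lambda_{-k}=\cdots=\lambda_{-1}=\lambda_0=a$ and $b=\lambda_{g+1}=\lambda_{g+2}=\cdots=\lambda_{g+k+1}$. Let $B_i^{k+1}$, $i=-k,\dots,g$, be the normalized B-splines of degree $k$ (order $k+1$) on this extended knot sequence, and for $i=-k,\dots,g-1$ define $$Z_i^{k+1}(x)=(k+1)\left(\frac{B_i^{k+1}(x)}{\lambda_{i+k+1}-\lambda_i}-\frac{B_{i+1}^{k+1}(x)}{\lambda_{i+k+2}-\lambda_{i+1}}\right),\qquad x\in[a,b].$$ Then the functions $Z_{-k}^{k+1},\dots,Z_{g-1}^{k+1}$ form a basis of the space $$\mathcal{Z}_k^{\Delta\lambda}[a,b]=\Big\{s\in \mathcal{S}_k^{\Delta\lambda}[a,b] \;:\; \int_a^b s(x)\,\mathrm{d}x=0\Big\}.$$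
   Context: $\mathcal{S}_k^{\Delta\lambda}[a,b]$ is the space of functions on $[a,b]$ that are polynomials of degree at most $k$ on each $[\lambda_i,\lambda_{i+1}]$, $i=0,\dots,g$, and are $k-1$ times continuously differentiable on $[a,b]$. Normalized B-splines are defined by the Cox–de Boor recursion: $B_i^1(x)=1$ if $x\in[\lambda_i,\lambda_{i+1})$ and $0$ otherwise (with the usual convention at the right endpoint $b$), and $B_i^{m+1}(x)=\frac{x-\lambda_i}{\lambda_{i+m}-\lambda_i}B_i^m(x)+\frac{\lambda_{i+m+1}-x}{\lambda_{i+m+1}-\lambda_{i+1}}B_{i+1}^m(x)$, with the convention that terms with zero denominator are omitted. The function $Z_i^{k+1}$ coincides with the derivative of the B-spline $B_i^{k+2}$; the denominators $\lambda_{i+k+1}-\lambda_i$ for $i=-k,\dots,g$ are positive. *)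

(* Defs.v *)
From Stdlib Require Import Reals.
From Coquelicot Require Import Coquelicot.
Open Scope R_scope.

Fixpoint sumR (n : nat) (f : nat -> R) : R :=
  match n with
  | O => 0
  | S n' => sumR n' f + f n'
  end.

(* Order-1 B-spline on the knot sequence t, with the usual convention at the
   right endpoint rb: B_i^1(rb) = 1 when t i < t (i+1) = rb. *)
Definition B1 (t : nat -> R) (rb : R) (i : nat) (x : R) : R :=
  if Rle_dec (t i) x then
    if Rlt_dec x (t (S i)) then 1
    else if Req_EM_T x rb then
           if Req_EM_T (t (S i)) rb then
             if Rlt_dec (t i) (t (S i)) then 1 else 0
           else 0
         else 0
  else 0.

(* bsp t rb m i = B_i^{m+1}, the normalized B-spline of order m+1 (degree m),
   by the Cox--de Boor recursion; terms with zero denominator are omitted. *)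
Fixpoint bsp (t : nat -> R) (rb : R) (m : nat) (i : nat) (x : R) : R :=
  match m with
  | O => B1 t rb i x
  | S m' =>
      (if Req_EM_T (t (i + m)%nat) (t i) then 0
       else (x - t i) / (t (i + m)%nat - t i) * bsp t rb m' i x)
    + (if Req_EM_T (t (i + m + 1)%nat) (t (S i)) then 0
       else (t (i + m + 1)%nat - x) / (t (i + m + 1)%nat - t (S i))
              * bsp t rb m' (S i) x)
  end.

(* Extended knot sequence, shifted by k so that it is indexed by nat:
   ext_knots k g lam j = lambda_{j-k}, j = 0 .. g+2k+1, with
   lambda_{-k} = ... = lambda_0 and lambda_{g+1} = ... = lambda_{g+k+1}. *)
Definition ext_knots (k g : nat) (lam : nat -> R) (j : nat) : R :=
  if Nat.leb j k then lam O
  else if Nat.leb (j - k) (S g) then lam (j - k)%nat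
  else lam (S g).

(* Z_i^{k+1} with paper index i = j - k, j = 0 .. g+k-1. *)
Definition Zfun (k g : nat) (lam : nat -> R) (j : nat) (x : R) : R :=
  let t := ext_knots k g lam in
  let b := lam (S g) in
  INR (S k) * (bsp t b k j x / (t (j + k + 1)%nat - t j)
               - bsp t b k (S j) x / (t (j + k + 2)%nat - t (S j))).

(* s is (m times) continuously differentiable on [a,b]: it agrees on [a,b]
   with a function that is C^m on R. *)
Definition Cm_on (m : nat) (a b : R) (s : R -> R) : Prop :=
  exists F : R -> R,
    (forall x, a <= x <= b -> F x = s x) /\
    (forall j, (j < m)%nat -> forall x, ex_derive (Derive_n F j) x) /\
    (forall x, continuous (Derive_n F m) x).

Definition spline_space (k g : nat) (lam : nat -> R) (s : R -> R) : Prop :=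
  (forall i, (i <= g)%nat ->
     exists c : nat -> R,
       forall x, lam i <= x <= lam (S i) ->
         s x = sumR (S k) (fun j => c j * x ^ j)) /\
  Cm_on (k - 1) (lam O) (lam (S g)) s.

Definition Zspace (k g : nat) (lam : nat -> R) (s : R -> R) : Prop :=
  spline_space k g lam s /\ is_RInt s (lam O) (lam (S g)) 0.

(* Main.v *)
Require Import Defs.
From Stdlib Require Import Reals Lra Lia.
From Coquelicot Require Import Coquelicot.
Open Scope R_scope.

Lemma ball_R (x y : R) (e : posreal) : ball x e y <-> Rabs (y - x) < e.
Proof. unfold ball; simpl; unfold AbsRing_ball, abs, minus, plus, opp; simpl. tauto. Qed.

Lemma locally_R (x : R) (P : R -> Prop) (d : R) : 0 < d ->
  (forall y, Rabs (y - x) < d -> P y) -> locally x P.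
Proof. intros hd H. exists (mkposreal d hd). intros y hy. apply H. apply ball_R in hy. exact hy. Qed.

Lemma der_plus (f g : R -> R) (x df dg : R) : is_derive f x df -> is_derive g x dg -> is_derive (fun y => f y + g y) x (df + dg).
Proof. intros; exact (is_derive_plus f g x df dg H H0). Qed.
Lemma der_minus (f g : R -> R) (x df dg : R) : is_derive f x df -> is_derive g x dg -> is_derive (fun y => f y - g y) x (df - dg).
Proof. intros; exact (is_derive_minus f g x df dg H H0). Qed.
Lemma der_mult (f g : R -> R) (x df dg : R) : is_derive f x df -> is_derive g x dg -> is_derive (fun y => f y * g y) x (df * g x + f x * dg).
Proof. intros. exact (is_derive_mult f g x df dg H H0 Rmult_comm). Qed.
Lemma der_scal (c : R) (f : R -> R) (x df : R) : is_derive f x df -> is_derive (fun y => c * f y) x (c * df).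
Proof. intros; exact (is_derive_scal f x c df H). Qed.
Lemma der_const (c : R) (x : R) : is_derive (fun _ => c) x 0.
Proof. exact (is_derive_const c x). Qed.
Lemma der_id (x : R) : is_derive (fun y => y) x 1.
Proof. exact (is_derive_id x). Qed.
Lemma der_ext_loc (f g : R -> R) (x l d : R) : 0 < d -> (forall y, Rabs (y - x) < d -> f y = g y) -> is_derive f x l -> is_derive g x l.
Proof. intros hd H H1. apply (is_derive_ext_loc f g x l); auto. apply (locally_R x _ d hd H). Qed.
Lemma der_eq (f : R -> R) (x l l' : R) : is_derive f x l -> l = l' -> is_derive f x l'.
Proof. intros; subst; auto. Qed.

Lemma sumR_ext n f g : (forall j, (j < n)%nat -> f j = g j) -> sumR n f = sumR n g.
Proof. induction n; simpl; intros; auto. rewrite IHn by (intros; apply H; lia). rewrite H by lia; auto. Qed.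
Lemma sumR_plus n f g : sumR n (fun j => f j + g j) = sumR n f + sumR n g.
Proof. induction n; simpl; [lra|]. rewrite IHn; lra. Qed.
Lemma sumR_minus n f g : sumR n (fun j => f j - g j) = sumR n f - sumR n g.
Proof. induction n; simpl; [lra|]. rewrite IHn; lra. Qed.
Lemma sumR_scal n c f : sumR n (fun j => c * f j) = c * sumR n f.
Proof. induction n; simpl; [lra|]. rewrite IHn; lra. Qed.
Lemma sumR_zero n f : (forall j, (j < n)%nat -> f j = 0) -> sumR n f = 0.
Proof. induction n; simpl; intros; auto. rewrite IHn by (intros; apply H; lia). rewrite H by lia; lra. Qed.
Lemma sumR_front n f : sumR (S n) f = f O + sumR n (fun j => f (S j)).
Proof. induction n; simpl; [lra|]. simpl in IHn. rewrite IHn. lra. Qed.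
Definition Ev (p : nat) : nat -> R := fun l => if Nat.eqb l p then 1 else 0.
Lemma sumR_Ev n d p : (p < n)%nat -> sumR n (fun l => d l * Ev p l) = d p.
Proof. induction n; intros; [lia|]. simpl. unfold Ev at 2. destruct (Nat.eqb_spec n p).
  - subst. rewrite sumR_zero. lra. intros j hj. unfold Ev. destruct (Nat.eqb_spec j p); [lia|lra].
  - rewrite IHn by lia. lra. Qed.
Lemma sumR_Ev1 n p : (p < n)%nat -> sumR n (Ev p) = 1.
Proof. intros. rewrite <- (sumR_Ev n (fun _ => 1) p H). apply sumR_ext. intros; lra. Qed.

Lemma der_sumR n (f : nat -> R -> R) (df : nat -> R) x :
  (forall j, (j < n)%nat -> is_derive (f j) x (df j)) ->
  is_derive (fun y => sumR n (fun j => f j y)) x (sumR n df).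
Proof. induction n; intros H; simpl.
  - apply der_const.
  - apply der_plus. apply IHn; intros; apply H; lia. apply H; lia. Qed.

Lemma cont_sumR n (f : nat -> R -> R) x :
  (forall j, (j < n)%nat -> continuous (f j) x) ->
  continuous (fun y => sumR n (fun j => f j y)) x.
Proof. induction n; intros H; simpl.
  - apply continuous_const.
  - apply (continuous_plus (fun y => sumR n (fun j => f j y)) (f n)). apply IHn; intros; apply H; lia. apply H; lia. Qed.

Lemma RInt_sumR n (f : nat -> R -> R) (I : nat -> R) a b :
  (forall j, (j < n)%nat -> is_RInt (f j) a b (I j)) ->
  is_RInt (fun y => sumR n (fun j => f j y)) a b (sumR n I).
Proof. induction n; intros H; simpl.
  - assert (H0 := is_RInt_const a b 0). unfold scal in H0; simpl in H0; unfold mult in H0; simpl in H0; rewrite Rmult_0_r in H0; exact H0.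
  - apply (is_RInt_plus (fun y => sumR n (fun j => f j y)) (f n)). apply IHn; intros; apply H; lia. apply H; lia. Qed.

Definition cprev (c : nat -> R) (l : nat) : R := match l with O => 0 | S l' => c l' end.

Lemma sum_diff n (c u : nat -> R) :
  sumR n (fun j => c j * (u j - u (S j))) =
  sumR n (fun l => (c l - cprev c l) * u l) - (match n with O => 0 | S n' => c n' * u n end).
Proof. induction n; simpl; [lra|]. rewrite IHn. destruct n; simpl; lra. Qed.


Definition inv0 (x : R) : R := if Req_EM_T x 0 then 0 else / x.
Lemma inv0_mul x : x <> 0 -> x * inv0 x = 1.
Proof. intros. unfold inv0. destruct (Req_EM_T x 0); [contradiction|]. field; auto. Qed.
Lemma inv0_0 : inv0 0 = 0.
Proof. unfold inv0. destruct (Req_EM_T 0 0); auto; contradiction. Qed.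
Lemma inv0_div x y : y <> 0 -> x / y = x * inv0 y.
Proof. intros. unfold inv0. destruct (Req_EM_T y 0); [contradiction|]. auto. Qed.

Section Rec.
Variable t : nat -> R.
Hypothesis tmono : forall i j, (i <= j)%nat -> t i <= t j.

Fixpoint rec (m j : nat) (v : nat -> R) (x : R) : R :=
  match m with
  | O => v j
  | S m' => (x - t j) * inv0 (t (j + m) - t j) * rec m' j v x
            + (t (j + m + 1) - x) * inv0 (t (j + m + 1) - t (S j)) * rec m' (S j) v x
  end.

Fixpoint drec (i m j : nat) (v : nat -> R) (x : R) : R :=
  match i with
  | O => rec m j v x
  | S i' => match m with
            | O => 0
            | S m' => INR m * (drec i' m' j v x * inv0 (t (j + m) - t j)
                               - drec i' m' (S j) v x * inv0 (t (j + m + 1) - t (S j)))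
            end
  end.

Lemma bsp_rec (rb : R) m : forall j x, Defs.bsp t rb m j x = rec m j (fun l => Defs.B1 t rb l x) x.
Proof.
  induction m; intros j x. reflexivity. cbn [bsp rec]. rewrite !IHm.
  destruct (Req_dec_T (t (j + S m)%nat) (t j)) as [e1|e1];
  destruct (Req_dec_T (t (j + S m + 1)%nat) (t (S j))) as [e2|e2].
  - rewrite e1, e2, !Rminus_diag, inv0_0. ring.
  - rewrite e1, Rminus_diag, inv0_0. rewrite (inv0_div _ (t (j + S m + 1)%nat - t (S j))). ring.
    intro; apply e2; lra.
  - rewrite e2, Rminus_diag, inv0_0. rewrite (inv0_div _ (t (j + S m)%nat - t j)). ring.
    intro; apply e1; lra.
  - rewrite (inv0_div _ (t (j + S m + 1)%nat - t (S j))), (inv0_div _ (t (j + S m)%nat - t j)). ring.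
    intro; apply e1; lra. intro; apply e2; lra.
Qed.



Lemma rec_ext m : forall j v1 v2 x, (forall l, v1 l = v2 l) -> rec m j v1 x = rec m j v2 x.
Proof. induction m; intros; simpl; auto. rewrite (IHm j v1 v2), (IHm (S j) v1 v2); auto. Qed.

Lemma rec_lin m : forall j v1 v2 x, rec m j (fun l => v1 l - v2 l) x = rec m j v1 x - rec m j v2 x.
Proof. induction m; intros; simpl; auto. rewrite IHm, IHm. ring. Qed.

Lemma drec_lin i : forall m j v1 v2 x, drec i m j (fun l => v1 l - v2 l) x = drec i m j v1 x - drec i m j v2 x.
Proof. induction i; intros; simpl. apply rec_lin. destruct m; [ring|]. rewrite IHi, IHi. ring. Qed.

Lemma rec_zero_beyond m : forall j v x, (forall l, (j <= l)%nat -> v l = 0) -> rec m j v x = 0.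
Proof. induction m; intros; simpl. apply H; lia. rewrite IHm, (IHm (S j)); try ring; intros; apply H; lia. Qed.

Lemma der_lin1 (p q x : R) : is_derive (fun y => (y - p) * q) x q.
Proof. auto_derive; auto; ring. Qed.
Lemma der_lin2 (p q x : R) : is_derive (fun y => (p - y) * q) x (- q).
Proof. auto_derive; auto; ring. Qed.

Lemma rec_deriv m : forall j v (x : R),
  is_derive (rec (S m) j v) x
    (INR (S m) * (rec m j v x * inv0 (t (j + S m) - t j)
                 - rec m (S j) v x * inv0 (t (j + S m + 1) - t (S j)))).
Proof.
  induction m; intros j v x.
  - cbn [rec]. auto_derive. auto. simpl. ring.
  - set (A := inv0 (t (j + S (S m)) - t j)).
    set (C := inv0 (t (j + S (S m) + 1) - t (S j))).
    eapply der_eq.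
    + apply (der_plus (fun y => (y - t j) * A * rec (S m) j v y)
                      (fun y => (t (j + S (S m) + 1) - y) * C * rec (S m) (S j) v y)).
      * apply (der_mult (fun y => (y - t j) * A) (rec (S m) j v)). apply der_lin1. apply IHm.
      * apply (der_mult (fun y => (t (j + S (S m) + 1) - y) * C) (rec (S m) (S j) v)). apply der_lin2. apply IHm.
    + cbn [rec].
      set (A1 := inv0 (t (j + S m) - t j)).
      set (A2 := inv0 (t (j + S m + 1) - t (S j))).
      replace (inv0 (t (S j + S m) - t (S j))) with A2 by (unfold A2; do 3 f_equal; lia).
      replace (S j + S m + 1)%nat with (j + S (S m) + 1)%nat by lia.
      replace (S j + S (S m))%nat with (j + S (S m) + 1)%nat by lia.
      set (A3 := inv0 (t (j + S (S m) + 1) - t (S (S j)))).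
      set (r0 := rec m j v x). set (r1 := rec m (S j) v x). set (r2 := rec m (S (S j)) v x).
      assert (K : A2 * r1 * ((t (j + S (S m)) - t j) * A - (t (j + S (S m) + 1) - t (S j)) * C) = 0).
      { destruct (Req_dec_T (t (j + S m + 1)) (t (S j))) as [e|e].
        - unfold A2. rewrite e, Rminus_diag, inv0_0. ring.
        - assert (h1 : t (S j) <= t (j + S m + 1)) by (apply tmono; lia).
          assert (h2 : t j <= t (S j)) by (apply tmono; lia).
          assert (h3 : t (j + S m + 1) <= t (j + S (S m))) by (apply tmono; lia).
          assert (h4 : t (j + S (S m)) <= t (j + S (S m) + 1)) by (apply tmono; lia).
          unfold A, C. rewrite !inv0_mul. ring. intro; apply e; lra. intro; apply e; lra. }
      rewrite !S_INR. replace (t (j + S m + 1)%nat) with (t (j + S (S m))%nat) by (f_equal; lia).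
      match goal with |- ?L = ?Rr => assert (HH : L - Rr = - (INR m + 1) * (A2 * r1 * ((t (j + S (S m)) - t j) * A - (t (j + S (S m) + 1) - t (S j)) * C))) by ring end.
      rewrite K in HH. lra.
Qed.

Lemma drec_deriv i : forall m j v (x : R), is_derive (drec i m j v) x (drec (S i) m j v x).
Proof.
  induction i; intros m j v x.
  - destruct m.
    + apply der_const.
    + apply rec_deriv.
  - destruct m.
    + apply der_const.
    + set (A := inv0 (t (j + S m) - t j)). set (C := inv0 (t (j + S m + 1) - t (S j))).
      eapply der_eq.
      * apply (der_scal (INR (S m)) (fun y => drec i m j v y * A - drec i m (S j) v y * C)).
        apply (der_minus (fun y => drec i m j v y * A) (fun y => drec i m (S j) v y * C)).
        -- apply (der_mult (drec i m j v) (fun _ => A)). apply IHi. apply der_const.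
        -- apply (der_mult (drec i m (S j) v) (fun _ => C)). apply IHi. apply der_const.
      * unfold A, C. cbn [drec]. ring.
Qed.

Definition NV (v : nat -> R) := forall l, t l = t (S l) -> v l = 0.

Lemma rec_Z0 m : forall j v x, NV v -> t j = t (j + S m)%nat -> rec m j v x = 0.
Proof.
  induction m; intros j v x hv e.
  - simpl. apply hv. rewrite e. f_equal. lia.
  - cbn [rec].
    assert (h1 : t j <= t (j + S m)) by (apply tmono; lia).
    assert (h2 : t (j + S m) <= t (j + S (S m))) by (apply tmono; lia).
    assert (h3 : t j <= t (S j)) by (apply tmono; lia).
    assert (h4 : t (S j) <= t (S j + S m)) by (apply tmono; lia).
    replace (S j + S m)%nat with (j + S (S m))%nat in h4 by lia.
    rewrite (IHm j v x hv) by lra.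
    rewrite (IHm (S j) v x hv) by (replace (S j + S m)%nat with (j + S (S m))%nat by lia; lra).
    ring.
Qed.

Lemma PU_aux m v x : NV v -> forall n,
  sumR (S n) (fun l => rec (S m) l v x) =
  (x - t 0) * inv0 (t (0 + S m) - t 0) * rec m 0 v x + sumR n (fun l => rec m (S l) v x)
  + (t (n + S m + 1) - x) * inv0 (t (n + S m + 1) - t (S n)) * rec m (S n) v x.
Proof.
  intros hv n. induction n.
  - simpl. ring.
  - change (sumR (S (S n)) (fun l => rec (S m) l v x)) with
      (sumR (S n) (fun l => rec (S m) l v x) + rec (S m) (S n) v x).
    rewrite IHn. cbn [rec sumR].
    replace (n + S m + 1)%nat with (S n + S m)%nat by lia.
    replace (S n + S m + 1)%nat with (S n + S (S m))%nat by lia.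
    assert (K : (t (S n + S m) - x) * inv0 (t (S n + S m) - t (S n)) * rec m (S n) v x
              + (x - t (S n)) * inv0 (t (S n + S m) - t (S n)) * rec m (S n) v x = rec m (S n) v x).
    { destruct (Req_dec_T (t (S n + S m)) (t (S n))) as [e|e].
      - rewrite (rec_Z0 m (S n) v x hv) by auto. ring.
      - replace ((t (S n + S m) - x) * inv0 (t (S n + S m) - t (S n)) * rec m (S n) v x
              + (x - t (S n)) * inv0 (t (S n + S m) - t (S n)) * rec m (S n) v x)
          with ((t (S n + S m) - t (S n)) * inv0 (t (S n + S m) - t (S n)) * rec m (S n) v x) by ring.
        rewrite inv0_mul. ring. intro; apply e; lra. }
    lra.
Qed.

Lemma PU_rec m v x n : NV v -> rec m 0 v x = 0 -> rec m (S n) v x = 0 ->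
  sumR (S n) (fun l => rec (S m) l v x) = sumR (S n) (fun l => rec m l v x).
Proof.
  intros hv h0 hn. rewrite (PU_aux m v x hv n), h0, hn, sumR_front, h0. ring.
Qed.

Section Jump.
Variable q : nat.
Hypothesis hq1 : t q < t (S q).
Hypothesis hq2 : t (S q) < t (S (S q)).
Definition wj : nat -> R := fun l => Ev q l - Ev (S q) l.

Lemma Ev_eq p : Ev p p = 1.
Proof. unfold Ev. rewrite Nat.eqb_refl. auto. Qed.
Lemma Ev_neq p l : l <> p -> Ev p l = 0.
Proof. intros. unfold Ev. rewrite (proj2 (Nat.eqb_neq _ _) H). auto. Qed.

Lemma rec1_jump j : rec 1 j wj (t (S q)) = 0.
Proof.
  cbn [rec]. unfold wj.
  replace (j + 1 + 1)%nat with (S (S j)) by lia. replace (j + 1)%nat with (S j) by lia.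
  assert (C : j = q \/ j = S q \/ S j = q \/ (j <> q /\ j <> S q /\ S j <> q /\ S j <> S q)) by lia.
  destruct C as [C|[C|[C|C]]].
  - subst j. rewrite !Ev_eq, (Ev_neq q (S q)), (Ev_neq (S q) q) by lia.
    rewrite !inv0_mul; try ring; intro; lra.
  - subst j. rewrite Rminus_diag, (Ev_neq q (S (S q))), (Ev_neq (S q) (S (S q))) by lia. ring.
  - rewrite C, Rminus_diag, (Ev_neq q j), (Ev_neq (S q) j) by lia. ring.
  - destruct C as [c1 [c2 [c3 c4]]].
    rewrite (Ev_neq q j), (Ev_neq (S q) j), (Ev_neq q (S j)), (Ev_neq (S q) (S j)) by lia. ring.
Qed.

Lemma rec_jump m : forall j, rec (S m) j wj (t (S q)) = 0.
Proof.
  induction m; intros j. apply rec1_jump.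
  change (rec (S (S m)) j wj (t (S q))) with
   ((t (S q) - t j) * inv0 (t (j + S (S m)) - t j) * rec (S m) j wj (t (S q))
    + (t (j + S (S m) + 1) - t (S q)) * inv0 (t (j + S (S m) + 1) - t (S j)) * rec (S m) (S j) wj (t (S q))).
  rewrite !IHm. ring.
Qed.

Lemma drec_jump i : forall m j, (i < m)%nat -> drec i m j wj (t (S q)) = 0.
Proof.
  induction i; intros m j hi.
  - destruct m; [lia|]. apply rec_jump.
  - destruct m; [lia|]. cbn [drec]. rewrite !IHi by lia. ring.
Qed.
End Jump.
End Rec.


Lemma glue_der (P Q : R -> R) (c l : R) : is_derive P c l -> is_derive Q c l -> P c = Q c ->
  is_derive (fun y => if Rlt_dec y c then P y else Q y) c l.
Proof.
  intros hP hQ e. apply is_derive_Reals. apply is_derive_Reals in hP, hQ.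
  intros eps heps. destruct (hP eps heps) as [d1 h1]. destruct (hQ eps heps) as [d2 h2].
  assert (hd : 0 < Rmin d1 d2) by (apply Rmin_pos; apply cond_pos).
  exists (mkposreal _ hd). intros h hh0 hh. simpl in hh.
  destruct (Rlt_dec c c) as [r|_]; [lra|].
  destruct (Rlt_dec (c + h) c) as [r|r].
  - rewrite <- e. apply h1; auto. apply Rlt_le_trans with (1 := hh). apply Rmin_l.
  - apply h2; auto. apply Rlt_le_trans with (1 := hh). apply Rmin_r.
Qed.

Lemma glue_cont (P Q : R -> R) (c : R) : continuous P c -> continuous Q c -> P c = Q c ->
  continuous (fun y => if Rlt_dec y c then P y else Q y) c.
Proof.
  intros hP hQ e. apply continuity_pt_filterlim. apply continuity_pt_filterlim in hP, hQ.
  intros eps heps. destruct (hP eps heps) as [d1 [hd1 h1]]. destruct (hQ eps heps) as [d2 [hd2 h2]].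
  exists (Rmin d1 d2). split. apply Rmin_pos; auto.
  intros y [hy1 hy2]. simpl in *.
  destruct (Rlt_dec c c) as [r|_]; [lra|].
  destruct (Rlt_dec y c) as [r|r].
  - rewrite <- e. apply h1. split; auto. apply Rlt_le_trans with (1 := hy2). apply Rmin_l.
  - apply h2. split; auto. apply Rlt_le_trans with (1 := hy2). apply Rmin_r.
Qed.

Lemma der_cont (f : R -> R) (x l : R) : is_derive f x l -> continuous f x.
Proof. intros. apply (ex_derive_continuous f x). exists l; auto. Qed.

Section GS.
Variables (V VL : R -> nat -> R) (n : nat) (D : nat -> (nat -> R) -> R -> R).
Hypothesis loc : forall c, exists d, 0 < d /\ (forall y, c <= y < c + d -> V y = V c)
                                   /\ (forall y, c - d < y < c -> V y = VL c).
Hypothesis Dder : forall i v x, is_derive (D i v) x (D (S i) v x).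
Hypothesis Djump : forall c i, (i < n)%nat -> D i (VL c) c = D i (V c) c.

Definition FF (x : R) : R := D 0 (V x) x.
Definition HH (c : R) (i : nat) (y : R) : R := if Rlt_dec y c then D i (VL c) y else D i (V c) y.

Lemma HH_der c i y : (S i < n)%nat -> is_derive (HH c i) y (HH c (S i) y).
Proof.
  intros hi. unfold HH at 2.
  destruct (Rlt_dec y c) as [r|r].
  - apply (der_ext_loc (D i (VL c)) (HH c i) y _ (c - y)). lra.
    intros z hz. unfold HH. destruct (Rlt_dec z c); auto. apply Rabs_def2 in hz. lra.
    apply Dder.
  - destruct (Req_dec y c) as [e|ne].
    + subst y. apply glue_der. rewrite <- Djump by lia. apply Dder. apply Dder. apply Djump; lia.
    + apply (der_ext_loc (D i (V c)) (HH c i) y _ (y - c)). lra.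
      intros z hz. unfold HH. destruct (Rlt_dec z c); auto. apply Rabs_def2 in hz. lra.
      apply Dder.
Qed.

Lemma HH_cont c i y : (i < n)%nat -> continuous (HH c i) y.
Proof.
  intros hi.
  destruct (Rlt_dec y c) as [r|r].
  - apply (continuous_ext_loc (HH c i) (D i (VL c))). apply (locally_R y _ (c - y)). lra.
    intros z hz. unfold HH. destruct (Rlt_dec z c); auto. apply Rabs_def2 in hz. lra.
    eapply der_cont. apply Dder.
  - destruct (Req_dec y c) as [e|ne].
    + subst y. apply glue_cont. eapply der_cont. apply Dder.
      eapply der_cont. apply Dder. apply Djump; lia.
    + apply (continuous_ext_loc (HH c i) (D i (V c))). apply (locally_R y _ (y - c)). lra.
      intros z hz. unfold HH. destruct (Rlt_dec z c); auto. apply Rabs_def2 in hz. lra.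
      eapply der_cont. apply Dder.
Qed.

Lemma GS_main c : exists d, 0 < d /\ forall i, (i < n)%nat -> forall y, Rabs (y - c) < d ->
  Derive_n FF i y = HH c i y.
Proof.
  destruct (loc c) as [d [hd [hr hl]]]. exists d. split; auto.
  induction i; intros hi y hy.
  - simpl. unfold FF, HH. apply Rabs_def2 in hy.
    destruct (Rlt_dec y c). rewrite hl by lra. auto. rewrite hr by lra. auto.
  - simpl. rewrite (Derive_ext_loc _ (HH c i)).
    + apply is_derive_unique. apply HH_der. auto.
    + apply (locally_R y _ (d - Rabs (y - c))). lra.
      intros z hz. apply IHi. lia. 
      assert (Rabs (z - c) <= Rabs (z - y) + Rabs (y - c)) by
        (replace (z - c) with ((z - y) + (y - c)) by ring; apply Rabs_triang).
      lra.
Qed.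

Lemma GS_val i x : (i < n)%nat -> Derive_n FF i x = D i (V x) x.
Proof.
  intros hi. destruct (GS_main x) as [d [hd H]]. rewrite H; auto.
  unfold HH. destruct (Rlt_dec x x); [lra|auto]. rewrite Rminus_diag, Rabs_R0; auto.
Qed.

Lemma GS_exd i x : (S i < n)%nat -> ex_derive (Derive_n FF i) x.
Proof.
  intros hi. destruct (GS_main x) as [d [hd H]].
  apply (ex_derive_ext_loc (HH x i)). apply (locally_R x _ d hd). intros; symmetry; apply H; auto; lia.
  eexists. apply HH_der; auto.
Qed.

Lemma GS_cont i x : (i < n)%nat -> continuous (Derive_n FF i) x.
Proof.
  intros hi. destruct (GS_main x) as [d [hd H]].
  apply (continuous_ext_loc _ (HH x i)). apply (locally_R x _ d hd). intros; symmetry; apply H; auto.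
  apply HH_cont; auto.
Qed.
End GS.


Fixpoint PolyF (n : nat) (f : R -> R) : Prop :=
  match n with
  | O => exists c, forall x, f x = c
  | S n' => exists c h, PolyF n' h /\ forall x, f x = c + x * h x
  end.

Lemma PolyF_ext n f g : PolyF n f -> (forall x, f x = g x) -> PolyF n g.
Proof. destruct n; simpl; intros H e.
  - destruct H as [c hc]. exists c; intros; rewrite <- e; auto.
  - destruct H as [c [h [hh hf]]]. exists c, h. split; auto. intros; rewrite <- e; auto. Qed.

Lemma PolyF_const n c : PolyF n (fun _ => c).
Proof. induction n; simpl. exists c; auto. exists c, (fun _ => 0). split. destruct n; simpl.
  exists 0; auto. exists 0, (fun _ => 0). split. clear IHn. induction n; simpl. exists 0; auto.
  exists 0, (fun _ => 0). split; auto. intros; ring. intros; ring. intros; ring. Qed.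

Lemma PolyF_weak n f : PolyF n f -> PolyF (S n) f.
Proof. revert f. induction n; intros f H.
  - destruct H as [c hc]. exists c, (fun _ => 0). split. exists 0; auto. intros; rewrite hc; ring.
  - destruct H as [c [h [hh hf]]]. exists c, h. split; auto. Qed.

Lemma PolyF_plus n f g : PolyF n f -> PolyF n g -> PolyF n (fun x => f x + g x).
Proof. revert f g. induction n; intros f g H1 H2.
  - destruct H1 as [c1 e1], H2 as [c2 e2]. exists (c1 + c2). intros; rewrite e1, e2; auto.
  - destruct H1 as [c1 [h1 [p1 e1]]], H2 as [c2 [h2 [p2 e2]]].
    exists (c1 + c2), (fun x => h1 x + h2 x). split. apply IHn; auto. intros; rewrite e1, e2; ring. Qed.

Lemma PolyF_scal n a f : PolyF n f -> PolyF n (fun x => a * f x).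
Proof. revert f. induction n; intros f H.
  - destruct H as [c e]. exists (a * c). intros; rewrite e; auto.
  - destruct H as [c [h [p e]]]. exists (a * c), (fun x => a * h x). split. apply IHn; auto. intros; rewrite e; ring. Qed.

Lemma PolyF_mulx n f : PolyF n f -> PolyF (S n) (fun x => x * f x).
Proof. intros H. exists 0, f. split; auto. intros; ring. Qed.

Lemma PolyF_aff n f p q : PolyF n f -> PolyF (S n) (fun x => (p * x + q) * f x).
Proof. intros H. apply (PolyF_ext _ (fun x => p * (x * f x) + q * f x)).
  apply PolyF_plus. apply PolyF_scal. apply PolyF_mulx; auto. apply PolyF_weak, PolyF_scal; auto.
  intros; ring. Qed.

Lemma PolyF_to_sum n f : PolyF n f -> exists c : nat -> R, forall x, f x = sumR (S n) (fun j => c j * x ^ j).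
Proof. revert f. induction n; intros f H.
  - destruct H as [c e]. exists (fun _ => c). intros; simpl; rewrite e; ring.
  - destruct H as [c [h [p e]]]. destruct (IHn h p) as [c' e'].
    exists (fun j => match j with O => c | S j' => c' j' end). intros x.
    rewrite sumR_front. rewrite e, e'. rewrite pow_O. rewrite Rmult_1_r. f_equal.
    rewrite <- sumR_scal. apply sumR_ext. intros; simpl; ring. Qed.

Lemma sum_to_PolyF n (c : nat -> R) f : (forall x, f x = sumR (S n) (fun j => c j * x ^ j)) -> PolyF n f.
Proof. revert c f. induction n; intros c f e.
  - exists (c O). intros; rewrite e; simpl; ring.
  - exists (c O), (fun x => sumR (S n) (fun j => c (S j) * x ^ j)). split.
    apply (IHn (fun j => c (S j))). auto.
    intros x. rewrite e, sumR_front. rewrite pow_O, Rmult_1_r. f_equal.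
    rewrite <- sumR_scal. apply sumR_ext. intros; simpl; ring. Qed.

Lemma PolyF_der n f : PolyF n f -> exists f', PolyF (pred n) f' /\ forall x, is_derive f x (f' x).
Proof. revert f. induction n; intros f H.
  - destruct H as [c e]. exists (fun _ => 0). split. exists 0; auto.
    intros x. apply (is_derive_ext (fun _ => c)). intros; auto. apply der_const.
  - destruct H as [c [h [p e]]]. destruct (IHn h p) as [h' [p' d']].
    exists (fun x => h x + x * h' x). split.
    + destruct n. simpl. destruct p as [c0 e0]. destruct p' as [c1 e1]. exists (c0 + 0). intros; rewrite e0. 
      simpl in d'. assert (h' x = 0). { specialize (d' x). apply is_derive_unique in d'.
        rewrite <- d'. apply is_derive_unique. apply (is_derive_ext (fun _ => c0)). intros; auto. apply der_const. }
      rewrite H; ring.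
      change (PolyF (S n) (fun x => h x + x * h' x)). apply PolyF_plus. exact p. apply PolyF_mulx. exact p'.
    + intros x. apply (is_derive_ext (fun y => c + y * h y)). intros; auto.
      eapply der_eq. apply der_plus. apply der_const. apply der_mult. apply der_id. apply d'. cbv beta. ring.
Qed.

Lemma PolyF_exd n f x : PolyF n f -> ex_derive f x.
Proof. intros H. destruct (PolyF_der n f H) as [f' [_ d]]. exists (f' x). auto. Qed.

Lemma PolyF_Derive n f : PolyF n f -> PolyF (pred n) (Derive f).
Proof. intros H. destruct (PolyF_der n f H) as [f' [p d]]. apply (PolyF_ext _ f'); auto.
  intros x. symmetry. apply is_derive_unique. auto. Qed.

Lemma PolyF_Dn n f : PolyF n f -> forall j, PolyF (n - j) (Derive_n f j).
Proof. intros H j. induction j.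
  - rewrite Nat.sub_0_r. apply (PolyF_ext _ f); auto.
  - replace (n - S j)%nat with (pred (n - j)) by lia. apply (PolyF_ext _ (Derive (Derive_n f j))).
    apply PolyF_Derive; auto. intros; auto. Qed.


Section Knots.
Variables (k g : nat) (lam : nat -> R).
Hypothesis hk : (1 <= k)%nat.
Hypothesis hinc : forall i, (i <= g)%nat -> lam i < lam (S i).

Definition tt := ext_knots k g lam.

Lemma lam_mono_aux p d : (p + d <= S g)%nat -> lam p <= lam (p + d).
Proof. induction d; intros h. rewrite Nat.add_0_r; lra.
  replace (p + S d)%nat with (S (p + d)) by lia. specialize (hinc (p + d) ltac:(lia)). specialize (IHd ltac:(lia)). lra. Qed.
Lemma lam_mono p q : (p <= q)%nat -> (q <= S g)%nat -> lam p <= lam q.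
Proof. intros. replace q with (p + (q - p))%nat by lia. apply lam_mono_aux. lia. Qed.
Lemma lam_strict p q : (p < q)%nat -> (q <= S g)%nat -> lam p < lam q.
Proof. intros. apply Rlt_le_trans with (lam (S p)). apply hinc; lia. apply lam_mono; lia. Qed.

Lemma t_lo j : (j <= k)%nat -> tt j = lam O.
Proof. intros. unfold tt, ext_knots. rewrite (proj2 (Nat.leb_le _ _) H). auto. Qed.
Lemma t_mid i : (i <= S g)%nat -> tt (k + i) = lam i.
Proof. intros. unfold tt, ext_knots. destruct i.
  - rewrite Nat.add_0_r, Nat.leb_refl. auto.
  - rewrite (proj2 (Nat.leb_nle (k + S i) k)) by lia.
    replace (k + S i - k)%nat with (S i) by lia. rewrite (proj2 (Nat.leb_le _ _) H). auto. Qed.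
Lemma t_hi j : (k + S g <= j)%nat -> tt j = lam (S g).
Proof. intros. unfold tt, ext_knots. rewrite (proj2 (Nat.leb_nle j k)) by lia.
  destruct (Nat.leb_spec (j - k) (S g)). replace (j - k)%nat with (S g) by lia. auto. auto. Qed.

Lemma t_val j : tt j = lam (Nat.min (j - k) (S g)).
Proof. destruct (Nat.le_gt_cases j k).
  - rewrite t_lo by auto. rewrite Nat.min_l by lia. f_equal. lia.
  - destruct (Nat.le_gt_cases (j - k) (S g)).
    + replace j with (k + (j - k))%nat at 1 by lia. rewrite t_mid by auto. rewrite Nat.min_l by lia. auto.
    + rewrite t_hi by lia. rewrite Nat.min_r by lia. auto. Qed.

Lemma t_mono i j : (i <= j)%nat -> tt i <= tt j.
Proof. intros. rewrite !t_val. apply lam_mono. apply Nat.min_le_compat_r. lia. apply Nat.le_min_r. Qed.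
Lemma t_lt i j : (i < j)%nat -> (k < j)%nat -> (i <= k + g)%nat -> tt i < tt j.
Proof. intros. rewrite !t_val. apply lam_strict. 2: apply Nat.le_min_r.
  rewrite (Nat.min_l (i - k)) by lia. apply Nat.min_glb_lt; lia. Qed.
Lemma t_strict j : (k <= j)%nat -> (j <= k + g)%nat -> tt j < tt (S j).
Proof. intros. apply t_lt; lia. Qed.
Lemma t_ge_a j : lam O <= tt j.
Proof. rewrite t_val. apply lam_mono. lia. apply Nat.le_min_r. Qed.
Lemma t_le_b j : tt j <= lam (S g).
Proof. rewrite t_val. apply lam_mono. apply Nat.le_min_r. lia. Qed.

Lemma Dpos l m : (k <= l + m)%nat -> (l <= k + g)%nat -> tt l < tt (l + S m).
Proof. intros. apply t_lt; lia. Qed.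

Fixpoint cnt (n : nat) (x : R) : nat :=
  match n with O => O | S n' => (cnt n' x + if Rle_dec (lam (S n')) x then 1 else 0)%nat end.
Fixpoint cntL (n : nat) (x : R) : nat :=
  match n with O => O | S n' => (cntL n' x + if Rlt_dec (lam (S n')) x then 1 else 0)%nat end.
Definition EE (x : R) : nat -> R := Ev (k + cnt g x).
Definition EL (x : R) : nat -> R := Ev (k + cntL g x).

Lemma cnt_loc n c : exists d, 0 < d /\ (forall y, c <= y < c + d -> cnt n y = cnt n c)
                                   /\ (forall y, c - d < y < c -> cnt n y = cntL n c).
Proof.
  induction n.
  - exists 1. split. lra. split; intros; auto.
  - destruct IHn as [d [hd [h1 h2]]].
    destruct (Rtotal_order (lam (S n)) c) as [o|[o|o]].
    + exists (Rmin d (c - lam (S n))). split. apply Rmin_pos; lra.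
      assert (Rmin d (c - lam (S n)) <= d) by apply Rmin_l.
      assert (Rmin d (c - lam (S n)) <= c - lam (S n)) by apply Rmin_r.
      split; intros y hy; simpl; rewrite ?h1, ?h2 by lra; f_equal;
      repeat destruct Rle_dec; repeat destruct Rlt_dec; auto; lra.
    + exists d. split. auto.
      split; intros y hy; simpl; rewrite ?h1, ?h2 by lra; f_equal;
      repeat destruct Rle_dec; repeat destruct Rlt_dec; auto; lra.
    + exists (Rmin d (lam (S n) - c)). split. apply Rmin_pos; lra.
      assert (Rmin d (lam (S n) - c) <= d) by apply Rmin_l.
      assert (Rmin d (lam (S n) - c) <= lam (S n) - c) by apply Rmin_r.
      split; intros y hy; simpl; rewrite ?h1, ?h2 by lra; f_equal;
      repeat destruct Rle_dec; repeat destruct Rlt_dec; auto; lra.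
Qed.

Lemma EE_loc c : exists d, 0 < d /\ (forall y, c <= y < c + d -> EE y = EE c)
                                   /\ (forall y, c - d < y < c -> EE y = EL c).
Proof.
  destruct (cnt_loc g c) as [d [hd [h1 h2]]]. exists d. split; auto.
  split; intros y hy; unfold EE, EL; [rewrite h1 | rewrite h2]; auto.
Qed.

Lemma cnt_val i x : (i <= g)%nat -> (i = O \/ lam i <= x) -> (i = g \/ x < lam (S i)) ->
  forall n, (n <= g)%nat -> cnt n x = Nat.min n i.
Proof.
  intros hi h1 h2 n. induction n; intros hn; cbn [cnt cntL]; auto.
  rewrite IHn by lia. destruct (Rle_dec (lam (S n)) x) as [r|r].
  - destruct (Nat.le_gt_cases (S n) i). rewrite !Nat.min_l by lia. lia.
    exfalso. destruct h2 as [h2|h2]. lia. assert (lam (S i) <= lam (S n)) by (apply lam_mono; lia). lra.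
  - destruct (Nat.le_gt_cases (S n) i). 2: rewrite !Nat.min_r by lia; lia.
    exfalso. destruct h1 as [h1|h1]. lia. assert (lam (S n) <= lam i) by (apply lam_mono; lia). lra.
Qed.

Lemma cntL_val i x : (i <= g)%nat -> (i = O \/ lam i < x) -> (i = g \/ x <= lam (S i)) ->
  forall n, (n <= g)%nat -> cntL n x = Nat.min n i.
Proof.
  intros hi h1 h2 n. induction n; intros hn; cbn [cnt cntL]; auto.
  rewrite IHn by lia. destruct (Rlt_dec (lam (S n)) x) as [r|r].
  - destruct (Nat.le_gt_cases (S n) i). rewrite !Nat.min_l by lia. lia.
    exfalso. destruct h2 as [h2|h2]. lia. assert (lam (S i) <= lam (S n)) by (apply lam_mono; lia). lra.
  - destruct (Nat.le_gt_cases (S n) i). 2: rewrite !Nat.min_r by lia; lia.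
    exfalso. destruct h1 as [h1|h1]. lia. assert (lam (S n) <= lam i) by (apply lam_mono; lia). lra.
Qed.

Lemma locate x : exists i, (i <= g)%nat /\ (i = O \/ lam i <= x) /\ (i = g \/ x < lam (S i)).
Proof.
  assert (H : forall n, (n <= g)%nat -> exists i, (i <= n)%nat /\ (i = O \/ lam i <= x) /\ (i = n \/ x < lam (S i))).
  { induction n; intros hn.
    - exists O. split; auto.
    - destruct IHn as [i [h1 [h2 h3]]]. lia.
      destruct h3 as [h3|h3].
      + subst i. destruct (Rle_dec (lam (S n)) x).
        * exists (S n). auto.
        * exists n. split. lia. split; auto. right; lra.
      + exists i. split. lia. auto. }
  destruct (H g (le_n g)) as [i [h1 h2]]. exists i. auto.
Qed.

Lemma cnt_g_val i x : (i <= g)%nat -> (i = O \/ lam i <= x) -> (i = g \/ x < lam (S i)) -> cnt g x = i.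
Proof. intros. rewrite (cnt_val i x) by auto. apply Nat.min_r; auto. Qed.
Lemma cntL_g_val i x : (i <= g)%nat -> (i = O \/ lam i < x) -> (i = g \/ x <= lam (S i)) -> cntL g x = i.
Proof. intros. rewrite (cntL_val i x) by auto. apply Nat.min_r; auto. Qed.

Lemma cnt_jump c : cntL g c = cnt g c \/
  exists i, (1 <= i <= g)%nat /\ c = lam i /\ cnt g c = i /\ cntL g c = pred i.
Proof.
  destruct (locate c) as [i [h1 [h2 h3]]].
  rewrite (cnt_g_val i c) by auto.
  destruct h2 as [h2|h2].
  - left. subst i. apply cntL_g_val; [lia | left; auto | destruct h3; [left|right]; auto; lra].
  - destruct (Rle_lt_or_eq_dec _ _ h2) as [r|r].
    + left. apply cntL_g_val; [lia | right; auto | destruct h3; [left|right]; auto; lra].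
    + destruct i.
      * left. apply cntL_g_val; [lia | left; auto | destruct h3; [left|right]; auto; lra].
      * right. exists (S i). split. lia. split; auto. split; auto.
        apply cntL_g_val. lia. destruct i; [left; auto|]. right. rewrite <- r. apply hinc; lia.
        right. simpl. lra.
Qed.


Lemma cnt_le n x : (cnt n x <= n)%nat.
Proof. induction n; cbn [cnt]; auto. destruct Rle_dec; lia. Qed.

Lemma B1_E x : lam O <= x <= lam (S g) -> forall l, Defs.B1 tt (lam (S g)) l x = EE x l.
Proof.
  intros hx l. destruct (locate x) as [i [h1 [h2 h3]]].
  unfold EE. rewrite (cnt_g_val i x) by auto.
  assert (ha : lam O <= lam i) by (apply lam_mono; lia).
  unfold Defs.B1. destruct (Req_dec x (lam (S g))) as [eb|nb].
  -
    assert (i = g). { destruct h3; auto. assert (lam (S i) <= lam (S g)) by (apply lam_mono; lia). lra. } subst i.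
    destruct (Rle_dec (tt l) x) as [r1|r1]; [|exfalso; apply r1; rewrite eb; apply t_le_b].
    destruct (Rlt_dec x (tt (S l))) as [r2|r2]; [exfalso; rewrite eb in r2; generalize (t_le_b (S l)); lra|].
    destruct (Req_EM_T x (lam (S g))) as [_|c]; [|contradiction].
    destruct (Req_EM_T (tt (S l)) (lam (S g))) as [e2|e2].
    + destruct (Rlt_dec (tt l) (tt (S l))) as [r3|r3].
      * destruct (Nat.eq_dec l (k + g)) as [el|el]. subst l. rewrite Ev_eq. auto.
        rewrite Ev_neq by auto. exfalso.
        destruct (Nat.le_gt_cases l (k + g)).
        -- assert (tt (S l) < lam (S g)). { rewrite <- (t_mid (S g)) by lia. apply t_lt; lia. } lra.
        -- rewrite t_hi in r3 by lia. rewrite e2 in r3. lra.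
      * rewrite Ev_neq; auto. intro el; subst l. apply r3. apply t_strict; lia.
    + rewrite Ev_neq; auto. intro el; subst l. apply e2. apply t_hi. lia.
  - assert (hxb : x < lam (S g)) by lra.
    assert (hxi : x < lam (S i)) by (destruct h3 as [h3|h3]; [subst; auto|auto]).
    assert (hix : lam i <= x) by (destruct h2 as [h2|h2]; [subst; lra|auto]).
    destruct (Req_EM_T x (lam (S g))) as [c|_]; [contradiction|].
    destruct (Nat.eq_dec l (k + i)) as [el|el].
    + subst l. rewrite Ev_eq. rewrite t_mid by lia. replace (S (k + i)) with (k + S i)%nat by lia.
      rewrite t_mid by lia. destruct Rle_dec; [|lra]. destruct Rlt_dec; [auto|lra].
    + rewrite Ev_neq by auto.
      destruct (Rle_dec (tt l) x) as [r1|r1]; auto. destruct (Rlt_dec x (tt (S l))) as [r2|r2]; auto.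
      exfalso. destruct (Nat.lt_ge_cases l (k + i)).
      * assert (tt (S l) <= tt (k + i)) by (apply t_mono; lia). rewrite t_mid in H0 by lia. lra.
      * assert (tt (k + S i) <= tt l) by (apply t_mono; lia). rewrite t_mid in H0 by lia. lra.
Qed.

Lemma bsp_EE m j x : lam O <= x <= lam (S g) -> Defs.bsp tt (lam (S g)) m j x = rec tt m j (EE x) x.
Proof. intros hx. rewrite bsp_rec. apply rec_ext. apply B1_E; auto. Qed.

Lemma NV_Ev p : (k <= p)%nat -> (p <= k + g)%nat -> NV tt (Ev p).
Proof. intros h1 h2 l e. apply Ev_neq. intro; subst l. generalize (t_strict p h1 h2). lra. Qed.

Lemma NV_EE x : NV tt (EE x).
Proof. apply NV_Ev. lia. generalize (cnt_le g x). lia. Qed.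

Lemma EL_jump c i m j : (i < m)%nat -> drec tt i m j (EL c) c = drec tt i m j (EE c) c.
Proof.
  intros hi. unfold EL, EE. destruct (cnt_jump c) as [e|[p [hp [ec [e1 e2]]]]].
  - rewrite e. auto.
  - rewrite e1, e2. set (q := (k + pred p)%nat).
    replace (k + p)%nat with (S q) by (unfold q; lia).
    assert (eq : tt (S q) = c). { unfold q. replace (S (k + pred p)) with (k + p)%nat by lia. rewrite t_mid by lia. auto. }
    assert (hq1 : tt q < tt (S q)) by (apply t_strict; unfold q; lia).
    assert (hq2 : tt (S q) < tt (S (S q))) by (apply t_strict; unfold q; lia).
    apply Rminus_diag_uniq. rewrite <- drec_lin. rewrite <- eq.
    apply (drec_jump tt q hq1 hq2 i m j hi).
Qed.

Lemma rec_at_a m : forall j, rec tt m j (Ev k) (lam O) = if Nat.eqb (j + m) k then 1 else 0.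
Proof.
  induction m; intros j.
  - cbn [rec]. rewrite Nat.add_0_r. unfold Ev. destruct (Nat.eqb j k); auto.
  - cbn [rec]. rewrite !IHm.
    destruct (Nat.eqb_spec (j + m) k) as [e1|e1]; destruct (Nat.eqb_spec (S j + m) k) as [e2|e2];
    destruct (Nat.eqb_spec (j + S m) k) as [e3|e3]; try lia.
    + rewrite (t_lo j) by lia. rewrite Rminus_diag. ring.
    + rewrite (t_lo (S j)) by lia. replace (j + S m + 1)%nat with (k + 1)%nat by lia.
      rewrite t_mid by lia. rewrite inv0_mul. ring. generalize (hinc O ltac:(lia)). intros; intro; lra.
    + ring.
Qed.

Lemma rec_at_b m : forall j, rec tt m j (Ev (k + g)) (lam (S g)) = Ev (k + g) j.
Proof.
  induction m; intros j.
  - auto.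
  - cbn [rec]. rewrite !IHm.
    destruct (Nat.eq_dec j (k + g)) as [e|e].
    + subst j. rewrite Ev_eq, (Ev_neq (k + g) (S (k + g))) by lia.
      rewrite t_mid by lia. rewrite (t_hi (k + g + S m)) by lia. rewrite inv0_mul. ring.
      generalize (hinc g ltac:(lia)). intros; intro; lra.
    + rewrite (Ev_neq _ j) by auto.
      destruct (Nat.eq_dec (S j) (k + g)) as [e'|e'].
      * rewrite (t_hi (j + S m + 1)) by lia. rewrite Rminus_diag. ring.
      * rewrite Ev_neq by auto. ring.
Qed.

Lemma EE_a : EE (lam O) = Ev k.
Proof. unfold EE. rewrite (cnt_g_val O (lam O)). rewrite Nat.add_0_r; auto. lia. left; auto.
  destruct (Nat.eq_dec g O); [left; symmetry; auto | right; apply (hinc O); lia]. Qed.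
Lemma EE_b : EE (lam (S g)) = Ev (k + g).
Proof. unfold EE. rewrite (cnt_g_val g (lam (S g))); auto. right. apply lam_mono; lia. Qed.


Definition nk (x : R) := lam O < x < lam (S g) /\ forall i, (i <= S g)%nat -> x <> lam i.

Lemma nk_open x : nk x -> exists d, 0 < d /\ forall y, Rabs (y - x) < d -> nk y.
Proof.
  intros [hx hne].
  assert (H : forall n, (n <= S g)%nat -> exists d, 0 < d /\ forall y, Rabs (y - x) < d -> forall i, (i <= n)%nat -> y <> lam i).
  { induction n; intros hn.
    - exists (Rabs (x - lam O)). split. apply Rabs_pos_lt. intro; apply (hne O); [lia|lra].
      intros y hy i hi. replace i with O by lia. intro e. subst y.
      rewrite Rabs_minus_sym in hy. lra.
    - destruct IHn as [d [hd H]]. lia.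
      exists (Rmin d (Rabs (x - lam (S n)))). split. apply Rmin_pos; auto. apply Rabs_pos_lt. intro; apply (hne (S n)); auto; lra.
      intros y hy i hi. assert (Rmin d (Rabs (x - lam (S n))) <= d) by apply Rmin_l.
      assert (Rmin d (Rabs (x - lam (S n))) <= Rabs (x - lam (S n))) by apply Rmin_r.
      destruct (Nat.eq_dec i (S n)). subst i. intro e. rewrite e in hy. rewrite Rabs_minus_sym in hy. lra.
      apply H. lra. lia. }
  destruct (H (S g) (le_n _)) as [d [hd Hd]].
  exists (Rmin d (Rmin (x - lam O) (lam (S g) - x))). split. repeat apply Rmin_pos; lra.
  intros y hy. assert (Rmin d (Rmin (x - lam O) (lam (S g) - x)) <= d) by apply Rmin_l.
  assert (Rmin d (Rmin (x - lam O) (lam (S g) - x)) <= Rmin (x - lam O) (lam (S g) - x)) by apply Rmin_r.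
  assert (Rmin (x - lam O) (lam (S g) - x) <= x - lam O) by apply Rmin_l.
  assert (Rmin (x - lam O) (lam (S g) - x) <= lam (S g) - x) by apply Rmin_r.
  apply Rabs_def2 in hy as hy'.
  split. lra. intros i hi. apply Hd; auto. lra.
Qed.

Lemma nk_EE x : nk x -> exists d, 0 < d /\ forall y, Rabs (y - x) < d -> nk y /\ EE y = EE x.
Proof.
  intros hx. destruct (nk_open x hx) as [d1 [hd1 H1]].
  destruct (EE_loc x) as [d2 [hd2 [H2 H3]]].
  assert (eL : EL x = EE x).
  { unfold EL, EE. destruct (cnt_jump x) as [e|[i [hi [e _]]]]. rewrite e; auto.
    exfalso. destruct hx as [_ hx]. apply (hx i). lia. auto. }
  exists (Rmin d1 d2). split. apply Rmin_pos; auto.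
  intros y hy. assert (Rmin d1 d2 <= d1) by apply Rmin_l. assert (Rmin d1 d2 <= d2) by apply Rmin_r.
  split. apply H1. lra. apply Rabs_def2 in hy.
  destruct (Rlt_dec y x). rewrite H3. auto. lra. apply H2. lra.
Qed.

Lemma between_nk i y : (i <= g)%nat -> lam i < y < lam (S i) -> nk y.
Proof.
  intros hi hy. split. split.
  apply Rle_lt_trans with (lam i). apply lam_mono; lia. lra.
  apply Rlt_le_trans with (lam (S i)). lra. apply lam_mono; lia.
  intros j hj e. subst y. destruct (Nat.le_gt_cases j i).
  assert (lam j <= lam i) by (apply lam_mono; lia). lra.
  assert (lam (S i) <= lam j) by (apply lam_mono; lia). lra.
Qed.

Lemma nk_between x : nk x -> exists i, (i <= g)%nat /\ lam i < x < lam (S i).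
Proof.
  intros [hx hne]. destruct (locate x) as [i [h1 [h2 h3]]]. exists i. split; auto. split.
  - destruct h2 as [h2|h2]. subst; lra. destruct (Rle_lt_or_eq_dec _ _ h2); auto. exfalso. apply (hne i); [lia|auto].
  - destruct h3 as [h3|h3]. subst; lra. auto.
Qed.

Lemma nk_ab x : nk x -> lam O <= x <= lam (S g).
Proof. intros [h _]; lra. Qed.

Lemma bsp_der m j x : nk x ->
  is_derive (Defs.bsp tt (lam (S g)) (S m) j) x
   (INR (S m) * (Defs.bsp tt (lam (S g)) m j x * inv0 (tt (j + S m) - tt j)
                - Defs.bsp tt (lam (S g)) m (S j) x * inv0 (tt (j + S m + 1) - tt (S j)))).
Proof.
  intros hx. destruct (nk_EE x hx) as [d [hd H]].
  rewrite !bsp_EE by (apply nk_ab; auto).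
  apply (der_ext_loc (rec tt (S m) j (EE x)) _ x _ d hd).
  intros y hy. destruct (H y hy) as [h1 h2]. rewrite bsp_EE by (apply nk_ab; auto). rewrite h2. auto.
  apply rec_deriv. apply t_mono.
Qed.

Lemma PU m x : (m <= k)%nat -> lam O <= x <= lam (S g) ->
  sumR (S (k + g)) (fun l => Defs.bsp tt (lam (S g)) m l x) = 1.
Proof.
  intros hm hx. rewrite (sumR_ext _ _ (fun l => rec tt m l (EE x) x)) by (intros; apply bsp_EE; auto).
  generalize (cnt_le g x). intros hc.
  induction m.
  - simpl rec. unfold EE. apply sumR_Ev1. lia.
  - rewrite PU_rec. apply IHm; lia. apply t_mono. apply NV_EE.
    apply rec_Z0. apply t_mono. apply NV_EE. rewrite !t_lo by lia. auto.
    apply rec_zero_beyond. intros l hl. unfold EE. apply Ev_neq. lia.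
Qed.

Lemma bsp_beyond m x : lam O <= x <= lam (S g) -> Defs.bsp tt (lam (S g)) m (S (k + g)) x = 0.
Proof. intros hx. rewrite bsp_EE by auto. apply rec_zero_beyond. intros l hl. unfold EE. apply Ev_neq.
  generalize (cnt_le g x). lia. Qed.

Lemma bsp_degen m l x : lam O <= x <= lam (S g) -> (l + S m <= k)%nat -> Defs.bsp tt (lam (S g)) m l x = 0.
Proof. intros hx hl. rewrite bsp_EE by auto. apply rec_Z0. apply t_mono. apply NV_EE. rewrite !t_lo by lia. auto. Qed.

Lemma bsp_zero_delta m l x : lam O <= x <= lam (S g) -> tt l = tt (l + S m) -> Defs.bsp tt (lam (S g)) m l x = 0.
Proof. intros hx hl. rewrite bsp_EE by auto. apply rec_Z0. apply t_mono. apply NV_EE. auto. Qed.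

Definition CE (s : R -> R) := exists G : R -> R, (forall x, continuous G x) /\
   forall x, lam O <= x <= lam (S g) -> G x = s x.

Lemma bsp_CE m j : (1 <= m)%nat -> CE (Defs.bsp tt (lam (S g)) m j).
Proof.
  intros hm. exists (FF EE (fun i v x => drec tt i m j v x)). split.
  - intros x.
    assert (Hd : forall i v x, is_derive ((fun i v x => drec tt i m j v x) i v) x ((fun i v x => drec tt i m j v x) (S i) v x)).
    { intros. apply drec_deriv. apply t_mono. }
    assert (Hj : forall c i, (i < m)%nat -> (fun i v x => drec tt i m j v x) i (EL c) c = (fun i v x => drec tt i m j v x) i (EE c) c).
    { intros; apply EL_jump; auto. }
    exact (GS_cont EE EL m (fun i v x => drec tt i m j v x) EE_loc Hd Hj O x hm).
  - intros x hx. unfold FF. rewrite bsp_EE; auto.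
Qed.

Lemma CE_plus f1 f2 : CE f1 -> CE f2 -> CE (fun x => f1 x + f2 x).
Proof. intros [G1 [c1 e1]] [G2 [c2 e2]]. exists (fun x => G1 x + G2 x). split.
  intros x. apply (continuous_plus G1 G2); auto. intros x hx; rewrite e1, e2; auto. Qed.
Lemma CE_minus f1 f2 : CE f1 -> CE f2 -> CE (fun x => f1 x - f2 x).
Proof. intros [G1 [c1 e1]] [G2 [c2 e2]]. exists (fun x => G1 x - G2 x). split.
  intros x. apply (continuous_minus G1 G2); auto. intros x hx; rewrite e1, e2; auto. Qed.
Lemma CE_scal c f : CE f -> CE (fun x => c * f x).
Proof. intros [G [c1 e1]]. exists (fun x => c * G x). split.
  intros x. apply (continuous_scal_r c G); auto. intros x hx; rewrite e1; auto. Qed.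
Lemma CE_sumR n (f : nat -> R -> R) : (forall j, (j < n)%nat -> CE (f j)) -> CE (fun x => sumR n (fun j => f j x)).
Proof. induction n; intros H.
  - exists (fun _ => 0). split. intros; apply continuous_const. intros; auto.
  - simpl. apply (CE_plus (fun x => sumR n (fun j => f j x)) (f n)). apply IHn; intros; apply H; lia. apply H; lia.
Qed.


Definition BS (m l : nat) (x : R) : R := Defs.bsp tt (lam (S g)) m l x.
Definition NN : nat := S (k + g).

Lemma deriv_sum m (d : nat -> R) x : nk x ->
  is_derive (fun y => sumR NN (fun l => d l * BS (S m) l y)) x
    (sumR NN (fun l => (d l - cprev d l) * (INR (S m) * inv0 (tt (l + S m) - tt l) * BS m l x))).
Proof.
  intros hx. eapply der_eq.
  - apply (der_sumR NN (fun l y => d l * BS (S m) l y)). intros l hl.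
    apply der_scal. apply bsp_der. auto.
  - set (u := fun l => INR (S m) * inv0 (tt (l + S m) - tt l) * BS m l x).
    rewrite (sumR_ext _ _ (fun l => d l * (u l - u (S l)))).
    + rewrite sum_diff. unfold NN, u. unfold BS at 2. rewrite bsp_beyond by (apply nk_ab; auto). cbv beta. ring.
    + intros l hl. unfold u, BS. replace (S l + S m)%nat with (l + S m + 1)%nat by lia. ring.
Qed.

Definition x0 : R := (lam O + lam 1%nat) / 2.
Lemma nk_x0 : nk x0.
Proof. apply (between_nk O). lia. generalize (hinc O ltac:(lia)). unfold x0. intros; lra. Qed.

Lemma zero_deriv (f : R -> R) x l : nk x -> (forall y, nk y -> f y = 0) -> is_derive f x l -> l = 0.
Proof.
  intros hx hz hd. destruct (nk_open x hx) as [d [hd' H]].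
  assert (is_derive f x 0).
  { apply (der_ext_loc (fun _ => 0) f x 0 d hd'). intros y hy. symmetry. apply hz. apply H. auto. apply der_const. }
  apply is_derive_unique in hd. apply is_derive_unique in H0. congruence.
Qed.

Lemma indep m : (m <= k)%nat -> forall d : nat -> R,
  (forall x, nk x -> sumR NN (fun l => d l * BS m l x) = 0) ->
  forall l, (k - m <= l)%nat -> (l < NN)%nat -> d l = 0.
Proof.
  induction m; intros hm d H l hl1 hl2.
  - set (i := (l - k)%nat).
    set (x := (lam i + lam (S i)) / 2).
    assert (hi : (i <= g)%nat) by (unfold i, NN in *; lia).
    assert (hx : lam i < x < lam (S i)) by (unfold x; generalize (hinc i hi); intros; lra).
    assert (hnk := between_nk i x hi hx).
    specialize (H x hnk).
    rewrite (sumR_ext _ _ (fun l' => d l' * Ev l l')) in H.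
    + rewrite sumR_Ev in H; auto.
    + intros l' hl'. unfold BS. rewrite bsp_EE by (apply nk_ab; auto). simpl rec. unfold EE.
      rewrite (cnt_g_val i x); auto. replace (k + i)%nat with l by (unfold i; lia). auto.
      right; lra. right; lra.
  - assert (He : forall x, nk x -> sumR NN (fun l => ((d l - cprev d l) * (INR (S m) * inv0 (tt (l + S m) - tt l))) * BS m l x) = 0).
    { intros x hx. rewrite <- (zero_deriv _ x _ hx H (deriv_sum m d x hx)).
      apply sumR_ext. intros; ring. }
    assert (Hc : forall l, (k - m <= l)%nat -> (l < NN)%nat -> d l = cprev d l).
    { intros l' h1 h2. specialize (IHm ltac:(lia) _ He l' h1 h2).
      assert (tt l' < tt (l' + S m)) by (apply Dpos; unfold NN in *; lia).
      assert (inv0 (tt (l' + S m) - tt l') <> 0).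
      { intro e. assert (HH := inv0_mul (tt (l' + S m) - tt l')). rewrite e in HH. 
        assert (tt (l' + S m) - tt l' <> 0) by lra. specialize (HH H1). lra. }
      assert (INR (S m) <> 0) by (apply not_0_INR; lia).
      apply Rmult_integral in IHm. destruct IHm as [e|e]. lra.
      apply Rmult_integral in e. destruct e; contradiction. }
    set (p := (k - S m)%nat).
    assert (Hp : forall r, (p + r < NN)%nat -> d (p + r)%nat = d p).
    { induction r; intros hr. rewrite Nat.add_0_r; auto.
      rewrite Hc by (unfold p in *; lia). replace (p + S r)%nat with (S (p + r)) by lia. simpl. apply IHr. lia. }
    assert (hd : d p = 0).
    { specialize (H x0 nk_x0).
      rewrite (sumR_ext _ _ (fun l => d p * BS (S m) l x0)) in H.
      - rewrite sumR_scal in H. unfold BS in H. rewrite PU in H. lra. lia. apply nk_ab. apply nk_x0.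
      - intros l' hl'. destruct (Nat.lt_ge_cases l' p).
        + unfold BS. rewrite bsp_degen. ring. apply nk_ab, nk_x0. unfold p in *; lia.
        + replace l' with (p + (l' - p))%nat by lia. rewrite Hp. auto. lia. }
    replace l with (p + (l - p))%nat by lia. rewrite Hp. auto. lia.
Qed.


Lemma CL (G : R -> R) : (forall x, continuous G x) -> (forall x, nk x -> is_derive G x 0) ->
  forall x, lam O <= x <= lam (S g) -> G x = G (lam O).
Proof.
  intros hc hd.
  assert (H1 : forall i, (i <= g)%nat -> forall x, lam i <= x <= lam (S i) -> G x = G (lam i)).
  { intros i hi x hx. destruct (MVT_gen G (lam i) x (fun _ => 0)) as [c [_ hcc]].
    - rewrite Rmin_left, Rmax_right by lra. intros y hy. apply hd. apply (between_nk i); auto. lra.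
    - intros y _. apply continuity_pt_filterlim. apply hc.
    - lra. }
  assert (H2 : forall i, (i <= S g)%nat -> G (lam i) = G (lam O)).
  { induction i; intros hi; auto. rewrite <- IHi by lia. apply H1. lia. split; [|lra]. left; apply hinc; lia. }
  intros x hx. destruct (locate x) as [i [h1 [h2 h3]]].
  rewrite (H1 i h1 x). apply H2; lia.
  split. destruct h2 as [h2|h2]; [subst; lra|auto].
  destruct h3 as [h3|h3]; [subst; lra|lra].
Qed.

Lemma fin_choice (P : nat -> R -> Prop) n : (forall i, (i <= n)%nat -> exists c, P i c) ->
  exists f : nat -> R, forall i, (i <= n)%nat -> P i (f i).
Proof.
  induction n; intros H.
  - destruct (H O (le_n _)) as [c hc]. exists (fun _ => c). intros i hi. replace i with O by lia. auto.
  - destruct IHn as [f hf]. intros; apply H; lia.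
    destruct (H (S n) (le_n _)) as [c hc].
    exists (fun i => if Nat.eqb i (S n) then c else f i). intros i hi.
    destruct (Nat.eqb_spec i (S n)). subst; auto. apply hf; lia.
Qed.

Fixpoint Good (m : nat) (s : R -> R) : Prop :=
  match m with
  | O => forall i, (i <= g)%nat -> exists c, forall x, lam i < x < lam (S i) -> s x = c
  | S m' => CE s /\ exists s', Good m' s' /\ forall x, nk x -> is_derive s x (s' x)
  end.

Definition cond (m : nat) (x : R) : Prop :=
  match m with O => nk x | S _ => lam O <= x <= lam (S g) end.

Lemma cond_nk m x : nk x -> cond m x.
Proof. destruct m; simpl; auto. apply nk_ab. Qed.

Lemma span m : (m <= k)%nat -> forall s, Good m s ->
  exists d : nat -> R, forall x, cond m x -> s x = sumR NN (fun l => d l * BS m l x).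
Proof.
  induction m; intros hm s hs.
  - simpl in hs. destruct (fin_choice (fun i c => forall x, lam i < x < lam (S i) -> s x = c) g hs) as [f hf].
    exists (fun l => f (l - k)%nat). intros x hx. simpl in hx.
    destruct (nk_between x hx) as [i [hi hxi]].
    rewrite (sumR_ext _ _ (fun l => f (l - k)%nat * Ev (k + i) l)).
    + rewrite sumR_Ev. replace (k + i - k)%nat with i by lia. apply hf; auto. unfold NN; lia.
    + intros l hl. unfold BS. rewrite bsp_EE by (apply nk_ab; auto). simpl rec. unfold EE.
      rewrite (cnt_g_val i x); auto. right; lra. right; lra.
  - destruct hs as [hce [s' [hs' hder]]].
    destruct (IHm ltac:(lia) s' hs') as [e he].
    set (d := fun l => sumR (S l) (fun l' => e l' * (tt (l' + S m) - tt l') / INR (S m))).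
    assert (hdiff : forall l, d l - cprev d l = e l * (tt (l + S m) - tt l) / INR (S m)).
    { intros l. unfold d. destruct l; simpl; ring. }
    assert (HD : forall x, nk x -> is_derive (fun y => sumR NN (fun l => d l * BS (S m) l y)) x (s' x)).
    { intros x hx. eapply der_eq. apply deriv_sum; auto.
      rewrite he by (apply cond_nk; auto). apply sumR_ext. intros l hl. rewrite hdiff.
      assert (INR (S m) <> 0) by (apply not_0_INR; lia).
      destruct (Req_dec (tt (l + S m)) (tt l)) as [z|z].
      - unfold BS. rewrite bsp_zero_delta. ring. apply nk_ab; auto. auto.
      - replace (e l * (tt (l + S m) - tt l) / INR (S m) * (INR (S m) * inv0 (tt (l + S m) - tt l) * BS m l x))
          with (e l * ((tt (l + S m) - tt l) * inv0 (tt (l + S m) - tt l)) * BS m l x) by (field; auto).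
        rewrite inv0_mul. ring. intro; apply z; lra. }
    assert (hce2 : CE (fun y => s y - sumR NN (fun l => d l * BS (S m) l y))).
    { apply CE_minus; auto. apply CE_sumR. intros l hl. apply CE_scal. apply bsp_CE. lia. }
    destruct hce2 as [G [hGc hGe]].
    assert (hG : forall x, nk x -> is_derive G x 0).
    { intros x hx. destruct (nk_open x hx) as [dd [hdd Hdd]].
      apply (der_ext_loc (fun y => s y - sumR NN (fun l => d l * BS (S m) l y)) G x 0 dd hdd).
      intros y hy. symmetry. apply hGe. apply nk_ab. apply Hdd. auto.
      eapply der_eq. apply der_minus. apply hder; auto. apply HD; auto. ring. }
    exists (fun l => d l + G (lam O)). intros x hx. simpl in hx.
    assert (E1 := CL G hGc hG x hx). rewrite hGe in E1 by auto.
    rewrite (sumR_ext _ _ (fun l => d l * BS (S m) l x + G (lam O) * BS (S m) l x)) by (intros; ring).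
    rewrite sumR_plus, sumR_scal. unfold BS at 2. rewrite PU; auto. lra.
Qed.


Lemma der_div_const (f : R -> R) (x l c : R) : is_derive f x l -> is_derive (fun y => f y / c) x (l / c).
Proof. intros H. unfold Rdiv. eapply der_eq. apply (der_mult f (fun _ => / c)). apply H. apply der_const. ring. Qed.

Lemma PolyF_rec m : forall l v, PolyF m (rec tt m l v).
Proof.
  induction m; intros l v.
  - exists (v l). intros; auto.
  - apply (PolyF_ext _ (fun x => (inv0 (tt (l + S m) - tt l) * x + (- (tt l * inv0 (tt (l + S m) - tt l)))) * rec tt m l v x
                               + ((- inv0 (tt (l + S m + 1) - tt (S l))) * x + tt (l + S m + 1) * inv0 (tt (l + S m + 1) - tt (S l))) * rec tt m (S l) v x)).
    apply PolyF_plus; apply PolyF_aff; auto.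
    intros x. cbn [rec]. ring.
Qed.

Lemma rec_piece i x m l : (i <= g)%nat -> lam i <= x <= lam (S i) -> (1 <= m)%nat ->
  rec tt m l (EE x) x = rec tt m l (Ev (k + i)) x.
Proof.
  intros hi hx hm.
  destruct (Req_dec x (lam (S i))) as [e|ne].
  - destruct (Nat.eq_dec i g) as [eg|ng].
    + unfold EE. rewrite (cnt_g_val i x); auto. 
      destruct (Nat.eq_dec i O); [left; auto | right; lra].
    + change (rec tt m l (EE x) x) with (drec tt O m l (EE x) x).
      rewrite <- (EL_jump x O m l) by lia.
      unfold EL. rewrite (cntL_g_val i x); auto.
      destruct (Nat.eq_dec i O); [left; auto | right]. rewrite e. apply hinc; lia. right; lra.
  - unfold EE. rewrite (cnt_g_val i x); auto.
    destruct (Nat.eq_dec i O); [left; auto | right; lra]. right; lra.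
Qed.

Lemma Zfun_BS j x : Zfun k g lam j x = INR (S k) * (BS k j x / (tt (j + k + 1) - tt j)
                                          - BS k (S j) x / (tt (j + k + 2) - tt (S j))).
Proof. reflexivity. Qed.


Lemma Z_eq_Phi j x : lam O <= x <= lam (S g) ->
  Zfun k g lam j x = INR (S k) * (rec tt k j (EE x) x / (tt (j + k + 1) - tt j)
                                 - rec tt k (S j) (EE x) x / (tt (j + k + 2) - tt (S j))).
Proof. intros hx. rewrite Zfun_BS. unfold BS. rewrite !bsp_EE by auto. auto. Qed.

Lemma Z_spline j : spline_space k g lam (Zfun k g lam j).
Proof.
  set (D1 := tt (j + k + 1) - tt j). set (D2 := tt (j + k + 2) - tt (S j)).
  split.
  - intros i hi.
    assert (HP : PolyF k (fun x => INR (S k) * (rec tt k j (Ev (k + i)) x / D1 - rec tt k (S j) (Ev (k + i)) x / D2))).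
    { apply (PolyF_ext _ (fun x => (INR (S k) / D1) * rec tt k j (Ev (k + i)) x + (- INR (S k) / D2) * rec tt k (S j) (Ev (k + i)) x)).
      apply PolyF_plus; apply PolyF_scal; apply PolyF_rec. intros; unfold Rdiv; ring. }
    destruct (PolyF_to_sum _ _ HP) as [c hc]. exists c. intros x hx.
    rewrite <- hc. rewrite Z_eq_Phi. fold D1 D2. rewrite !(rec_piece i x) by (auto; lia). auto.
    split. apply Rle_trans with (lam i). apply lam_mono; lia. lra.
    apply Rle_trans with (lam (S i)). lra. apply lam_mono; lia.
  - set (DZ := fun i v x => INR (S k) * (drec tt i k j v x / D1 - drec tt i k (S j) v x / D2)).
    assert (Hd : forall i v x, is_derive (DZ i v) x (DZ (S i) v x)).
    { intros i v x. unfold DZ. apply der_scal. apply der_minus; apply der_div_const; apply drec_deriv; apply t_mono. }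
    assert (Hj : forall c i, (i < k)%nat -> DZ i (EL c) c = DZ i (EE c) c).
    { intros c i hi. unfold DZ. rewrite !EL_jump by auto. auto. }
    exists (FF EE DZ). split; [|split].
    + intros x hx. unfold FF, DZ. rewrite Z_eq_Phi by auto. auto.
    + intros i hi x. apply (GS_exd EE EL k DZ EE_loc Hd Hj). lia.
    + intros x. apply (GS_cont EE EL k DZ EE_loc Hd Hj). lia.
Qed.


Lemma Wint j : is_RInt (fun x => INR (S k) * (BS k j x * inv0 (tt (j + S k) - tt j)
                                  - BS k (S j) x * inv0 (tt (j + S k + 1) - tt (S j))))
                 (lam O) (lam (S g)) (Ev (k + g) j).
Proof.
  set (DW := fun i v x => drec tt i (S k) j v x).
  assert (Hd : forall i v x, is_derive (DW i v) x (DW (S i) v x)).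
  { intros i v x. apply drec_deriv; apply t_mono. }
  assert (Hj : forall c i, (i < S k)%nat -> DW i (EL c) c = DW i (EE c) c).
  { intros c i hi. unfold DW. rewrite !EL_jump by auto. auto. }
  set (W := FF EE DW).
  assert (H := is_RInt_derive W (Derive_n W 1) (lam O) (lam (S g))).
  assert (hab : lam O <= lam (S g)) by (apply lam_mono; lia).
  rewrite Rmin_left, Rmax_right in H by auto.
  assert (Wb : W (lam (S g)) = Ev (k + g) j).
  { unfold W, FF, DW. cbn [drec]. rewrite EE_b. apply rec_at_b. }
  assert (Wa : W (lam O) = 0).
  { unfold W, FF, DW. cbn [drec]. rewrite EE_a. rewrite rec_at_a. destruct (Nat.eqb_spec (j + S k) k). lia. auto. }
  rewrite Wb, Wa in H.
  assert (Em : forall y : R, minus y 0 = y) by (intros; unfold minus, plus, opp; simpl; ring).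
  rewrite Em in H.
  eapply is_RInt_ext; [|apply H].
  - intros x hx. rewrite Rmin_left, Rmax_right in hx by auto.
    unfold W. rewrite (GS_val EE EL (S k) DW EE_loc Hd Hj) by lia. unfold DW. simpl drec.
    unfold BS. rewrite !bsp_EE by lra. auto.
  - intros x hx. assert (E := GS_exd EE EL (S k) DW EE_loc Hd Hj O x ltac:(lia)).
    apply Derive_correct in E. exact E.
  - intros x hx. apply (GS_cont EE EL (S k) DW EE_loc Hd Hj). lia.
Qed.

Lemma Z_int j : (j < g + k)%nat -> is_RInt (Zfun k g lam j) (lam O) (lam (S g)) 0.
Proof.
  intros hj. assert (H := Wint j). rewrite Ev_neq in H by lia.
  eapply is_RInt_ext; [|apply H].
  intros x hx. rewrite Zfun_BS.
  assert (hab : lam O <= lam (S g)) by (apply lam_mono; lia).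
  rewrite Rmin_left, Rmax_right in hx by auto.
  replace (j + k + 1)%nat with (j + S k)%nat by lia. replace (j + k + 2)%nat with (j + S k + 1)%nat by lia.
  rewrite !inv0_div. auto.
  assert (tt (S j) < tt (S j + S k)) by (apply Dpos; lia). replace (j + S k + 1)%nat with (S j + S k)%nat by lia. lra.
  assert (tt j < tt (j + S k)) by (apply Dpos; lia). lra.
Qed.

Lemma B_last_int : is_RInt (fun x => INR (S k) * inv0 (tt (k + g + S k) - tt (k + g)) * BS k (k + g) x)
                     (lam O) (lam (S g)) 1.
Proof.
  assert (H := Wint (k + g)). rewrite Ev_eq in H.
  eapply is_RInt_ext; [|apply H].
  intros x hx. rewrite (t_hi (k + g + S k + 1)) by lia. rewrite (t_hi (S (k + g))) by lia.
  replace (lam (S g) - lam (S g)) with 0 by ring. rewrite inv0_0. match goal with |- ?a = ?b => change (a = b :> R) end. ring. Qed.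


Lemma loc_Dn (F p : R -> R) i x : lam i < x < lam (S i) ->
  (forall y, lam i <= y <= lam (S i) -> F y = p y) ->
  locally x (fun y => forall n, Derive_n F n y = Derive_n p n y).
Proof.
  intros hx H. apply (locally_R x _ (Rmin (x - lam i) (lam (S i) - x))).
  apply Rmin_pos; lra.
  intros y hy. assert (Rmin (x - lam i) (lam (S i) - x) <= x - lam i) by apply Rmin_l.
  assert (Rmin (x - lam i) (lam (S i) - x) <= lam (S i) - x) by apply Rmin_r.
  apply Rabs_def2 in hy. intros n. apply Derive_n_ext_loc.
  apply (locally_R y _ (Rmin (y - lam i) (lam (S i) - y))). apply Rmin_pos; lra.
  intros z hz. assert (Rmin (y - lam i) (lam (S i) - y) <= y - lam i) by apply Rmin_l.
  assert (Rmin (y - lam i) (lam (S i) - y) <= lam (S i) - y) by apply Rmin_r.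
  apply Rabs_def2 in hz. apply H. lra.
Qed.

Lemma Good_spline (F : R -> R) :
  (forall j, (j < k - 1)%nat -> forall x, ex_derive (Derive_n F j) x) ->
  (forall x, continuous (Derive_n F (k - 1)) x) ->
  (forall i, (i <= g)%nat -> exists p, PolyF k p /\ forall x, lam i <= x <= lam (S i) -> F x = p x) ->
  forall m, (m <= k)%nat -> Good m (Derive_n F (k - m)).
Proof.
  intros hd hc hp. induction m; intros hm.
  - intros i hi. destruct (hp i hi) as [p [pp ep]].
    assert (P0 := PolyF_Dn k p pp k). rewrite Nat.sub_diag in P0. destruct P0 as [c hcc].
    exists c. intros x hx. rewrite Nat.sub_0_r.
    destruct (loc_Dn F p i x hx ep) as [e he]. rewrite he. auto. apply ball_center.
  - split; [|exists (Derive_n F (k - m)); split; [apply IHm; lia|]].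
    + exists (Derive_n F (k - S m)). split; auto.
      intros x. destruct (Nat.lt_ge_cases (k - S m) (k - 1)).
      * destruct (hd _ H x) as [l hl]. apply (der_cont _ x l hl).
      * replace (k - S m)%nat with (k - 1)%nat by lia. auto.
    + intros x hx. destruct (nk_between x hx) as [i [hi hxi]].
      destruct (hp i hi) as [p [pp ep]].
      assert (L := loc_Dn F p i x hxi ep).
      assert (EX : ex_derive (Derive_n F (k - S m)) x).
      { apply (ex_derive_ext_loc (Derive_n p (k - S m))).
        eapply filter_imp; [|exact L]. intros y hy. symmetry; apply hy.
        apply (PolyF_exd (k - (k - S m))). apply PolyF_Dn; auto. }
      apply Derive_correct in EX.
      replace (k - m)%nat with (S (k - S m)) by lia. exact EX.
Qed.


Lemma RInt_scal' (f : R -> R) a b c l : is_RInt f a b l -> is_RInt (fun x => c * f x) a b (c * l).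
Proof. intros H. exact (is_RInt_scal f a b c l H). Qed.
Lemma RInt_minus' (f h : R -> R) a b l1 l2 : is_RInt f a b l1 -> is_RInt h a b l2 -> is_RInt (fun x => f x - h x) a b (l1 - l2).
Proof. intros H1 H2. exact (is_RInt_minus f h a b l1 l2 H1 H2). Qed.

Lemma ab_le : lam O <= lam (S g).
Proof. apply lam_mono; lia. Qed.

Lemma Zu j x : (j < g + k)%nat -> Zfun k g lam j x =
  INR (S k) * inv0 (tt (j + S k) - tt j) * BS k j x - INR (S k) * inv0 (tt (S j + S k) - tt (S j)) * BS k (S j) x.
Proof.
  intros hj. rewrite Zfun_BS.
  replace (j + k + 1)%nat with (j + S k)%nat by lia. replace (j + k + 2)%nat with (S j + S k)%nat by lia.
  rewrite !inv0_div. ring.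
  assert (tt (S j) < tt (S j + S k)) by (apply Dpos; lia). lra.
  assert (tt j < tt (j + S k)) by (apply Dpos; lia). lra.
Qed.

Lemma inv0_nz l : (l <= k + g)%nat -> inv0 (tt (l + S k) - tt l) <> 0.
Proof.
  intros hl e. assert (tt l < tt (l + S k)) by (apply Dpos; lia).
  assert (HH := inv0_mul (tt (l + S k) - tt l)). rewrite e in HH. 
  assert (tt (l + S k) - tt l <> 0) by lra. specialize (HH H0). lra.
Qed.

Lemma main_b (c : nat -> R) :
  (forall x, lam O <= x <= lam (S g) -> sumR (g + k) (fun j => c j * Zfun k g lam j x) = 0) ->
  forall j, (j < g + k)%nat -> c j = 0.
Proof.
  intros H.
  set (c' := fun l => if Nat.ltb l (g + k) then c l else 0).
  set (u := fun l x => INR (S k) * inv0 (tt (l + S k) - tt l) * BS k l x).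
  assert (hc0 : c' (k + g)%nat = 0) by (unfold c'; rewrite (proj2 (Nat.ltb_ge _ _)); auto; lia).
  assert (H2 : forall x, nk x -> sumR NN (fun l => ((c' l - cprev c' l) * (INR (S k) * inv0 (tt (l + S k) - tt l))) * BS k l x) = 0).
  { intros x hx. rewrite <- (H x (nk_ab x hx)).
    transitivity (sumR NN (fun l => c' l * (u l x - u (S l) x))).
    - rewrite sum_diff. unfold NN. rewrite hc0.
      rewrite Rmult_0_l, Rminus_0_r. apply sumR_ext. intros; unfold u; ring.
    - unfold NN. cbn [sumR]. rewrite hc0.
      rewrite Rmult_0_l, Rplus_0_r. rewrite Nat.add_comm. apply sumR_ext. intros j hj.
      unfold c'. rewrite (proj2 (Nat.ltb_lt j (g + k))) by lia. rewrite Zu by lia. unfold u. ring. }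
  assert (H3 : forall l, (l < NN)%nat -> c' l = cprev c' l).
  { intros l hl. assert (E := indep k (le_n k) _ H2 l ltac:(lia) hl).
    apply Rmult_integral in E. destruct E as [E|E]. lra.
    apply Rmult_integral in E. destruct E as [E|E].
    exfalso. apply (not_0_INR (S k)); auto. exfalso; apply (inv0_nz l); auto. unfold NN in hl; lia. }
  assert (H4 : forall l, (l < NN)%nat -> c' l = 0).
  { induction l; intros hl. rewrite H3 by auto. auto. rewrite H3 by auto. simpl. apply IHl. lia. }
  intros j hj. specialize (H4 j ltac:(unfold NN; lia)). unfold c' in H4.
  rewrite (proj2 (Nat.ltb_lt j (g + k))) in H4 by lia. auto.
Qed.


Lemma cond_ab m x : (1 <= m)%nat -> lam O <= x <= lam (S g) -> cond m x.
Proof. destruct m; simpl; intros; [lia|auto]. Qed.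

Lemma main_c (s : R -> R) : Zspace k g lam s ->
  exists c : nat -> R, forall x, lam O <= x <= lam (S g) -> s x = sumR (g + k) (fun j => c j * Zfun k g lam j x).
Proof.
  intros [[hpieces [F [eF [hd hc]]]] hint].
  assert (hp : forall i, (i <= g)%nat -> exists p, PolyF k p /\ forall x, lam i <= x <= lam (S i) -> F x = p x).
  { intros i hi. destruct (hpieces i hi) as [cc hcc].
    exists (fun x => sumR (S k) (fun j => cc j * x ^ j)). split.
    apply (sum_to_PolyF k cc). auto.
    intros x hx. rewrite eF. apply hcc; auto.
    split. apply Rle_trans with (lam i). apply lam_mono; lia. lra.
    apply Rle_trans with (lam (S i)). lra. apply lam_mono; lia. }
  assert (HG := Good_spline F hd hc hp k (le_n k)). rewrite Nat.sub_diag in HG.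
  destruct (span k (le_n k) _ HG) as [d hdd].
  assert (hs : forall x, lam O <= x <= lam (S g) -> s x = sumR NN (fun l => d l * BS k l x)).
  { intros x hx. rewrite <- eF by auto. apply (hdd x). apply cond_ab; auto. }
  set (c := fun j => sumR (S j) (fun l => d l * (tt (l + S k) - tt l) / INR (S k))).
  set (n' := pred (g + k)).
  assert (hn' : (g + k = S n')%nat) by (unfold n'; lia).
  set (mu := d (k + g)%nat + c n' * (INR (S k) * inv0 (tt (k + g + S k) - tt (k + g)))).
  assert (KEY : forall x, lam O <= x <= lam (S g) ->
            sumR (g + k) (fun j => c j * Zfun k g lam j x) = s x - mu * BS k (k + g) x).
  { intros x hx.
    set (u := fun l => INR (S k) * inv0 (tt (l + S k) - tt l) * BS k l x).
    rewrite (sumR_ext _ _ (fun j => c j * (u j - u (S j)))) by (intros j hj; rewrite Zu by auto; unfold u; auto).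
    rewrite sum_diff. rewrite hn'.
    rewrite (sumR_ext _ _ (fun l => d l * BS k l x)).
    - rewrite hs by auto. unfold NN. replace (k + g)%nat with (S n') by lia. cbn [sumR].
      unfold mu, u. replace (k + g)%nat with (S n') by lia. ring.
    - intros l hl. unfold u. replace (c l - cprev c l) with (d l * (tt (l + S k) - tt l) / INR (S k)).
      + assert (INR (S k) <> 0) by (apply not_0_INR; lia).
        assert (tt l < tt (l + S k)) by (apply Dpos; lia).
        replace (d l * (tt (l + S k) - tt l) / INR (S k) * (INR (S k) * inv0 (tt (l + S k) - tt l) * BS k l x))
          with (d l * ((tt (l + S k) - tt l) * inv0 (tt (l + S k) - tt l)) * BS k l x) by (field; auto).
        rewrite inv0_mul. ring. lra.
      + unfold c. destruct l; simpl; ring. }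
  exists c. intros x hx. rewrite KEY by auto.
  assert (I1 : is_RInt (fun x => sumR (g + k) (fun j => c j * Zfun k g lam j x)) (lam O) (lam (S g)) 0).
  { rewrite <- (sumR_zero (g + k) (fun _ => 0)) by auto.
    apply (RInt_sumR (g + k) (fun j x => c j * Zfun k g lam j x)). intros j hj.
    replace 0 with (c j * 0) by ring. apply RInt_scal'. apply Z_int; auto. }
  assert (I2 := RInt_minus' _ _ _ _ _ _ hint I1).
  assert (I3 : is_RInt (fun x => mu * BS k (k + g) x) (lam O) (lam (S g)) 0).
  { rewrite Rminus_0_r in I2. eapply is_RInt_ext; [|apply I2]. intros y hy. rewrite Rmin_left, Rmax_right in hy by apply ab_le.
    cbv beta. rewrite KEY by lra. match goal with |- ?a = ?b => change (a = b :> R) end. ring. }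
  assert (I4 := RInt_scal' _ _ _ (INR (S k) * inv0 (tt (k + g + S k) - tt (k + g))) _ I3).
  assert (I5 := RInt_scal' _ _ _ mu _ B_last_int).
  assert (I6 : is_RInt (fun x => mu * (INR (S k) * inv0 (tt (k + g + S k) - tt (k + g)) * BS k (k + g) x)) (lam O) (lam (S g)) 0).
  { rewrite Rmult_0_r in I4. eapply is_RInt_ext; [|apply I4]. intros; cbv beta.
    match goal with |- ?a = ?b => change (a = b :> R) end. ring. }
  assert (I7 : is_RInt (fun x => mu * (INR (S k) * inv0 (tt (k + g + S k) - tt (k + g)) * BS k (k + g) x)) (lam O) (lam (S g)) (mu * 1)).
  { eapply is_RInt_ext; [|apply I5]. intros; cbv beta. auto. }
  apply (@is_RInt_unique R_CompleteNormedModule) in I7. apply (@is_RInt_unique R_CompleteNormedModule) in I6. rewrite I6 in I7.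
  assert (mu = 0) by (clear - I7; lra). rewrite H. ring.
Qed.

Lemma main_a j : (j < g + k)%nat -> Zspace k g lam (Zfun k g lam j).
Proof. intros hj. split. apply Z_spline. apply Z_int; auto. Qed.

End Knots.

Theorem theorem2 (k g : nat) (a b : R) (lam : nat -> R)
  (hk : (1 <= k)%nat) (hab : a < b)
  (h0 : lam O = a) (hg : lam (S g) = b)
  (hinc : forall i, (i <= g)%nat -> lam i < lam (S i)) :
  (forall j, (j < g + k)%nat -> Zspace k g lam (Zfun k g lam j)) /\
  (forall c : nat -> R,
     (forall x, a <= x <= b -> sumR (g + k) (fun j => c j * Zfun k g lam j x) = 0) ->
     forall j, (j < g + k)%nat -> c j = 0) /\
  (forall s : R -> R, Zspace k g lam s ->
     exists c : nat -> R, forall x, a <= x <= b ->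
       s x = sumR (g + k) (fun j => c j * Zfun k g lam j x)).
Proof.
  subst a b. split; [|split].
  - apply main_a; auto.
  - apply main_b; auto.
  - apply main_c; auto.
Qed.
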